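(* Let $U$ be a Hilbert space, $T: U\rightrightarrows U$, $(\hat u,\hat w)\in\operatorname{graph}T$, and $P,N,M\in\mathcal{L}(U;U)$ with $M\ge P\ge0$. If $(P,M-P)\in\mathcal{P}(T^{-1}(\hat w),\hat u)$, then $(N,P)$-subregularity of $T$ at $(\hat u,\hat w)$ implies $(P,N,M)$-partial subregularity at the same point. If $T^{-1}(\hat w)=\{\hat u\}$ is a singleton, these two properties are equivalent.
   Context: For $T\in\mathcal{L}(U;U)$: $\|x\|^2_T:=\langle Tx,x\rangle$, $\operatorname{dist}^2_T(z,A):=\inf_{u\in A}\|z-u\|^2_T$ ($\inf\emptyset=+\infty$); $T\ge S$ means $T-S$ positive semidefinite. For $M,P,N\in\mathcal{L}(U;U)$ with $N\ge0$, $M\ge0$, $M\ge P$, $T$ is $(P,N,M)$-partially subregular at $(\hat u,\hat w)$ if there is a neighbourhood $\mathcal{U}\ni\hat u$ with $\operatorname{dist}^2_N(\hat w,T(u)) + \operatorname{dist}^2_{M-P}(u,T^{-1}(\hat w))\ge\operatorname{dist}^2_M(u,T^{-1}(\hat w))$ for all $u\in\mathcal{U}$. $T$ is $(N,M)$-subregular if it is $(M,N,M)$-partially subregular. For $M,M'\in\mathcal{L}(U;U)$, $A\subset U$, $\hat u\in A$: $(M,M')\in\mathcal{P}(A,\hat u)$ means there is a neighbourhood $\mathcal{U}'\ni\hat u$ such that each $u\in\mathcal{U}'$ has a common projection onto $A$ with respect to $\|\cdot\|_M$ and $\|\cdot\|_{M'}$. *)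

(* Defs.v *)
(* real Hilbert space modelled as a complete normed
   module U over R : realType together with an inner product inducing its norm. *)
From HB Require Import structures.
From mathcomp Require Import all_boot all_order all_algebra.
From mathcomp Require Import all_classical all_reals all_analysis.
Set Implicit Arguments. Unset Strict Implicit. Unset Printing Implicit Defensive.
Import Order.TTheory GRing.Theory Num.Theory.
Import numFieldNormedType.Exports.
Local Open Scope classical_set_scope.
Local Open Scope ring_scope.

Section Defs.
Context {R : realType} {U : completeNormedModType R}.

Definition is_hilbert_inner (ip : U -> U -> R) : Prop :=
  (forall x y, ip x y = ip y x) /\
  (forall (a : R) x y z, ip (a *: x + y) z = a * ip x z + ip y z) /\
  (forall x, `|x| ^+ 2 = ip x x).

Definition is_bounded_linear (T : U -> U) : Prop :=
  linear T /\ continuous T.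

Definition op_sub (T S : U -> U) : U -> U := fun x => T x - S x.

Definition sqnorm (ip : U -> U -> R) (T : U -> U) (x : U) : R := ip (T x) x.

Definition psd (ip : U -> U -> R) (T : U -> U) : Prop :=
  forall x, 0 <= sqnorm ip T x.
Definition op_ge (ip : U -> U -> R) (T S : U -> U) : Prop := psd ip (op_sub T S).

(* dist_T^2(z, A) := inf_{u in A} ||z - u||_T^2, with inf of the empty set = +oo *)
Definition sqdist (ip : U -> U -> R) (T : U -> U) (z : U) (A : set U) : \bar R :=
  ereal_inf [set (sqnorm ip T (z - u))%:E | u in A].

Definition invmap (T : U -> set U) (w : U) : set U := [set u | T u w].

(* (P,N,M)-partial subregularity of T at (hu,hw); the standing requirements
   N >= 0, M >= 0, M >= P of the definition are included. *)
Definition partially_subregular (ip : U -> U -> R) (P N M : U -> U)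
    (T : U -> set U) (hu hw : U) : Prop :=
  psd ip N /\ psd ip M /\ op_ge ip M P /\
  exists V : set U, nbhs hu V /\
    forall u, V u ->
      (sqdist ip N hw (T u) + sqdist ip (op_sub M P) u (invmap T hw)
        >= sqdist ip M u (invmap T hw))%E.

Definition subregular (ip : U -> U -> R) (N M : U -> U)
    (T : U -> set U) (hu hw : U) : Prop :=
  partially_subregular ip M N M T hu hw.

Definition is_proj (ip : U -> U -> R) (M : U -> U) (A : set U) (u p : U) : Prop :=
  A p /\ forall a, A a -> sqnorm ip M (u - p) <= sqnorm ip M (u - a).

Definition common_proj (ip : U -> U -> R) (M M' : U -> U) (A : set U) (hu : U) : Prop :=
  exists V : set U, nbhs hu V /\
    forall u, V u -> exists p, is_proj ip M A u p /\ is_proj ip M' A u p.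

End Defs.

(* Main.v *)
Require Import Defs.
From HB Require Import structures.
From mathcomp Require Import all_boot all_order all_algebra.
From mathcomp Require Import all_classical all_reals all_analysis.
From mathcomp Require Import lra.
Import Order.TTheory GRing.Theory Num.Theory.
Import numFieldNormedType.Exports.
Local Open Scope classical_set_scope.
Local Open Scope ring_scope.

Section Aux.
Context {R : realType} {U : completeNormedModType R} {ip : U -> U -> R}
  (hip : is_hilbert_inner ip).

Lemma ip0l z : ip 0 z = 0.
Proof.
case: hip => _ [hl _]. have := hl 1 0 0 z. rewrite scale1r addr0 mul1r.
move=> h. have : ip 0 z + ip 0 z = ip 0 z + 0 by rewrite -h addr0.
by move/addrI.
Qed.

Lemma ipBl x y z : ip (x - y) z = ip x z - ip y z.
Proof.
case: hip => _ [hl _]. have := hl (-1) y x z.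
by rewrite scaleN1r mulN1r addrC => ->; rewrite addrC.
Qed.

Lemma sqnorm_sub (M P : U -> U) x :
  sqnorm ip (op_sub M P) x = sqnorm ip M x - sqnorm ip P x.
Proof. by rewrite /sqnorm /op_sub ipBl. Qed.

Lemma sqnorm_self (P : U -> U) x : sqnorm ip (op_sub P P) x = 0.
Proof. by rewrite sqnorm_sub subrr. Qed.

Lemma sqdist_proj (M : U -> U) A u p : is_proj ip M A u p ->
  sqdist ip M u A = (sqnorm ip M (u - p))%:E.
Proof.
move=> [Ap hp]; apply/le_anti/andP; split.
  by apply: ge_ereal_inf; exists (sqnorm ip M (u - p))%:E => //; exists p.
by apply/ereal_infP => _ [a Aa <-]; rewrite lee_fin hp.
Qed.

Lemma sqdist_le (M : U -> U) A u p : A p ->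
  (sqdist ip M u A <= (sqnorm ip M (u - p))%:E)%E.
Proof. by move=> Ap; apply: ge_ereal_inf; exists (sqnorm ip M (u - p))%:E => //; exists p. Qed.

Lemma sqdist1 (M : U -> U) u a : sqdist ip M u [set a] = (sqnorm ip M (u - a))%:E.
Proof. by rewrite /sqdist image_set1 ereal_inf1. Qed.

Lemma sqdist_self (P : U -> U) u A a : A a -> sqdist ip (op_sub P P) u A = 0%E.
Proof.
move=> Aa; rewrite (@sqdist_proj _ A u a) ?sqnorm_self //; split => // b _.
by rewrite !sqnorm_self.
Qed.

End Aux.

Theorem proposition4p5 (R : realType) (U : completeNormedModType R)
  (ip : U -> U -> R) (hip : is_hilbert_inner ip)
  (T : U -> set U) (hu hw : U) (hgraph : T hu hw)
  (P N M : U -> U)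
  (hP : is_bounded_linear P) (hN : is_bounded_linear N) (hM : is_bounded_linear M)
  (hMP : op_ge ip M P) (hP0 : psd ip P) :
  (common_proj ip P (op_sub M P) (invmap T hw) hu ->
     subregular ip N P T hu hw -> partially_subregular ip P N M T hu hw) /\
  (invmap T hw = [set hu] ->
     (subregular ip N P T hu hw <-> partially_subregular ip P N M T hu hw)).
Proof.
have hA : invmap T hw hu by [].
have psdM : psd ip M.
  move=> x; have := hMP x; rewrite (sqnorm_sub hip) => h.
  have := hP0 x; rewrite /sqnorm in h *; lra.
have part1 : common_proj ip P (op_sub M P) (invmap T hw) hu ->
     subregular ip N P T hu hw -> partially_subregular ip P N M T hu hw.
  move=> [V1 [nV1 hV1]] [psdN [_ [_ [V2 [nV2 hV2]]]]].
  split => //; split => //; split => //.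
  exists (V1 `&` V2); split; first by apply: filterI.
  move=> u [/hV1 [p [pP pMP]] /hV2].
  rewrite (sqdist_self hip P u _ _ hA) adde0 => h.
  rewrite (sqdist_proj _ _ _ _ pMP).
  apply: (le_trans (sqdist_le _ _ _ _ pP.1)).
  rewrite (sqdist_proj _ _ _ _ pP) in h.
  rewrite addeC; apply: (le_trans _ (leeD2l _ h)).
  by rewrite -EFinD lee_fin (sqnorm_sub hip) addrC subrK.
split => // hsing; split; first by apply: part1; exists setT; split;
  [exact: filterT | move=> u _; exists hu; rewrite hsing; split; split => // a ->].
move=> [psdN [_ [_ [V [nV hV]]]]].
split => //; split => //; split; first by move=> x; rewrite (sqnorm_self hip).
exists V; split => // u /hV; rewrite hsing !sqdist1 // (sqnorm_self hip) adde0.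
rewrite (sqnorm_sub hip).
case: (sqdist ip N hw (T u)) => [r| |] //= h.
  rewrite -EFinD lee_fin in h; rewrite lee_fin.
  move: h; rewrite addrA lerBrDr (addrC r) lerD2l; done.
exact: leey.
Qed.
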